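(* Let $n \geq 1$ and $0 < k < n$ be integers, and let $M$ be an invertible $n \times n$ matrix over the field $\mathbb{F}_2 = \{0,1\}$, acting on column vectors $x \in \mathbb{F}_2^n$ (binary strings of length $n$) by matrix multiplication with arithmetic modulo $2$. Let $S_k \subseteq \mathbb{F}_2^n$ be the set of binary strings of length $n$ with Hamming weight exactly $k$. Then there do not exist two distinct positions $i \neq j$ in $\{1,\dots,n\}$ such that the $i$-th digit of $Mx$ is the same for all $x \in S_k$ and the $j$-th digit of $Mx$ is the same for all $x \in S_k$.
   Context: $\mathrm{GL}_n(\mathbb{F}_2)$ denotes the group of invertible $n\times n$ matrices over the two-element field; it is isomorphic to the group of $n$-qubit permutation unitaries generated by CNOT gates, acting on computational basis strings. *)

(* Defs.v *)
From mathcomp Require Import all_boot all_algebra.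
Set Implicit Arguments. Unset Strict Implicit. Unset Printing Implicit Defensive.
Import GRing.Theory.
Local Open Scope ring_scope.

Definition hweight (n : nat) (x : 'cV['F_2]_n) : nat := #|[set i | x i 0 != 0]|.

Definition S_k (n k : nat) : {set 'cV['F_2]_n} := [set x | hweight x == k].

(* Main.v *)
Require Import Defs.
From mathcomp Require Import all_boot all_algebra zify.
Set Implicit Arguments. Unset Strict Implicit. Unset Printing Implicit Defensive.
Import GRing.Theory.
Local Open Scope ring_scope.

Lemma subset_card (T : finType) (A : {set T}) (m : nat) :
  (m <= #|A|)%N -> exists B : {set T}, B \subset A /\ #|B| = m.
Proof.
elim: m A => [|m IH] A hm; first by exists set0; rewrite sub0set cards0.
have /card_gt0P [x xA] : (0 < #|A|)%N by apply: leq_ltn_trans hm.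
have : (m <= #|A :\ x|)%N by rewrite (cardsD1 x A) xA in hm.
case/IH => B [sB cB]; exists (x |: B); split.
  rewrite subUset sub1set xA /=; apply: subset_trans sB _; exact: subsetDl.
rewrite cardsU1 cB; have -> : x \notin B.
  by apply/negP => /(subsetP sB); rewrite !inE eqxx.
by [].
Qed.

Definition indv n (A : {set 'I_n}) : 'cV['F_2]_n := \col_l (l \in A)%:R.

Lemma indv_S n k (A : {set 'I_n}) : #|A| = k -> indv A \in S_k n k.
Proof.
move=> cA; rewrite inE /hweight; apply/eqP; rewrite -cA; apply: eq_card => l.
by rewrite !inE mxE; case: (l \in A).
Qed.

Lemma mul_indv n (M : 'M['F_2]_n) i (A : {set 'I_n}) :
  (M *m indv A) i 0 = \sum_(l in A) M i l.
Proof.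
rewrite mxE [RHS]big_mkcond /=; apply: eq_bigr => l _; rewrite mxE.
by case: (l \in A); rewrite ?mulr1 ?mulr0.
Qed.

Lemma row_const n k (M : 'M['F_2]_n) i :
  (0 < k)%N -> (k < n)%N ->
  (forall x y : 'cV['F_2]_n, x \in S_k n k -> y \in S_k n k ->
          (M *m x) i 0 = (M *m y) i 0) ->
  forall a b, M i a = M i b.
Proof.
move=> k0 kn H a b; case: (eqVneq a b) => [->//|ab].
have : (k.-1 <= #|~: [set a; b]|)%N.
  rewrite cardsCs setCK card_ord cards2 ab /=; lia.
case/subset_card => B [sB cB].
have aB : a \notin B by apply/negP => /(subsetP sB); rewrite !inE eqxx.
have bB : b \notin B by apply/negP => /(subsetP sB); rewrite !inE eqxx orbT.
have ca : #|a |: B| = k by rewrite cardsU1 aB cB; lia.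
have cb : #|b |: B| = k by rewrite cardsU1 bB cB; lia.
have := H _ _ (indv_S ca) (indv_S cb).
rewrite !mul_indv (big_setU1 _ aB) (big_setU1 _ bB) /=.
by move/addIr.
Qed.

Lemma F2_cases (c : 'F_2) : c = 0 \/ c = 1.
Proof.
case: c => [[|[|m]] hm]; [left|right|]; try exact: val_inj; done.
Qed.

Theorem theorem1 (n k : nat) (M : 'M['F_2]_n) :
  (1 <= n)%N -> (0 < k)%N -> (k < n)%N -> M \in unitmx ->
  ~ (exists i j : 'I_n, i != j /\
       (forall x y : 'cV['F_2]_n, x \in S_k n k -> y \in S_k n k ->
          (M *m x) i 0 = (M *m y) i 0) /\
       (forall x y : 'cV['F_2]_n, x \in S_k n k -> y \in S_k n k ->
          (M *m x) j 0 = (M *m y) j 0)).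
Proof.
move=> n1 k0 kn uM [i [j [ij [Hi Hj]]]].
have ci := row_const k0 kn Hi; have cj := row_const k0 kn Hj.
have nz : forall r, (forall a b, M r a = M r b) -> M r r = 1.
  move=> r cr; case: (F2_cases (M r r)) => // h.
  have := mulmxV uM; move/matrixP => /(_ r r).
  rewrite !mxE big1 ?eqxx // => l _; by rewrite (cr l r) h mul0r.
have : \det M = 0.
  apply: (determinant_alternate ij) => l.
  by rewrite (ci l i) (cj l j) (nz i ci) (nz j cj).
move=> h; move: uM; by rewrite unitmxE h unitr0.
Qed.
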